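(* Let $F$ be a field with $\operatorname{char}F\ne2$, let $a,b\in F$ with $E=F(\sqrt a,\sqrt b)$ satisfying $[E:F]=4$. Suppose there exist (in a fixed algebraic closure of $F$) a Galois extension $D^{a,b}$ of $F$ with $E\subseteq D^{a,b}$, $\operatorname{Gal}(D^{a,b}/F)\cong D$ and $\operatorname{Gal}(D^{a,b}/F(\sqrt{ab}))\cong C$, and a cyclic quartic extension $C^a$ of $F$ with $F(\sqrt a)\subseteq C^a$. Let $K$ be the composite $D^{a,b}C^a$. Then $K/F$ is Galois and $\operatorname{Gal}(K/F)\cong D\curlywedge C$.
   Context: $D$ is the dihedral group of order 8, $C$ the cyclic group of order 4. $D\curlywedge C$ is the pullback of a homomorphism $\lambda:D\to\mathbb Z/2\mathbb Z$ with kernel isomorphic to $\mathbb Z/2\times\mathbb Z/2$ and the nontrivial homomorphism $\eta:C\to\mathbb Z/2\mathbb Z$: $D\curlywedge C=\{(u,v)\in D\times C:\lambda(u)=\eta(v)\}$, of order 16. *)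

(* Defs.v *)
From HB Require Import structures.
From mathcomp Require Import all_boot all_order all_algebra all_fingroup all_solvable all_field.
Set Implicit Arguments. Unset Strict Implicit. Unset Printing Implicit Defensive.

(* D = dihedral group of order 8 : the type  'D_8  (solvable/extremal.v)
   C = cyclic group of order 4   : the additive group  'Z_4
   Z/2Z                           : the additive group  'Z_2
   Z/2 x Z/2                      : the external direct product 'Z_2 * 'Z_2 *)

Definition pullback (aT bT rT : finGroupType) (lam : aT -> rT) (eta : bT -> rT)
  : {set (aT * bT)%type} :=
  [set u : (aT * bT)%type | lam u.1 == eta u.2].

(* Main.v *)
Require Import Defs.
From HB Require Import structures.
From mathcomp Require Import all_boot all_order all_algebra all_fingroup all_solvable all_field.
Import GRing.Theory.
Local Open Scope ring_scope.
Lemma prod_adjoin {F : fieldType} {L : splittingFieldType F} (D M : {subfield L}) (x : L) :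
  (M <= D)%VS -> (D * <<M; x>>)%VS = <<D; x>>%VS.
Proof.
move=> sMD; apply/eqP; rewrite eqEsubv; apply/andP; split.
  apply: prodv_sub; first exact: subv_adjoin.
  apply/FadjoinP; split; first exact: subv_trans sMD (subv_adjoin D x).
  exact: memv_adjoin.
apply/FadjoinP; split; first exact: field_subvMr.
by apply: (subvP (field_subvMl D _)); exact: memv_adjoin.
Qed.

Lemma sq_adjoin_degree {F : fieldType} {L : splittingFieldType F} (K : {subfield L}) (x : L) :
  x ^+ 2 \in K -> (adjoin_degree K x <= 2)%N.
Proof.
move=> x2K; pose p : {poly L} := 'X^2 - (x ^+ 2)%:P.
have pK : p \is a polyOver K.
  by rewrite rpredB ?rpredX ?polyOverX ?polyOverC.
have rp : root p x by rewrite /root !hornerE subrr.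
have szp : size p = 3%N by rewrite size_XnsubC.
have p0 : p != 0 by rewrite -size_poly_eq0 szp.
have := dvdp_leq p0 (minPoly_dvdp pK rp).
by rewrite size_minPoly szp.
Qed.

Lemma dim_comp {F : fieldType} {L : splittingFieldType F} (D C M : {subfield L}) :
  (M <= D)%VS -> (M <= C)%VS -> separable M C -> \dim C = (2 * \dim M)%N ->
  ~~ (C <= D)%VS -> \dim (D * C)%AS = (2 * \dim D)%N.
Proof.
move=> sMD sMC sepMC dC nCD.
set g := separable_generator M C.
have defC : (C : {vspace L}) = <<M; g>>%VS := eq_adjoin_separable_generator sepMC sMC.
rewrite /= defC prod_adjoin // dim_Fadjoin.
have degM : adjoin_degree M g = 2%N.
  have := dim_Fadjoin M g; rewrite -defC dC => /eqP.
  by rewrite eqn_pmul2r ?adim_gt0 // => /eqP <-.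
have le : (adjoin_degree D g <= 2)%N.
  rewrite -degM -ltnS -!size_minPoly; apply: dvdp_leq; last exact: minPolyS.
  by rewrite monic_neq0 ?monic_minPoly.
have ne1 : adjoin_degree D g != 1%N.
  rewrite adjoin_deg_eq1; apply: contra nCD => gD.
  by rewrite defC; apply/FadjoinP.
have gt0 : (0 < adjoin_degree D g)%N by [].
suff -> : adjoin_degree D g = 2%N by [].
by move: le ne1 gt0; case: (adjoin_degree D g) => [|[|[|]]].
Qed.
Lemma galois_prod {F : fieldType} {L : splittingFieldType F} (D C : {subfield L}) :
  galois 1%VS D -> galois 1%VS C -> galois 1%VS (D * C)%AS.
Proof.
move=> gD gC; have /and3P[_ sepD nD] := gD; have /and3P[_ sepC nC] := gC.
apply/and3P; split; first exact: sub1v.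
  set g := separable_generator 1%AS C.
  have defC : (C : {vspace L}) = <<1%AS; g>>%VS.
    exact: eq_adjoin_separable_generator sepC (sub1v C).
  rewrite /= defC prod_adjoin ?sub1v //.
  apply: (separable_trans sepD); rewrite -adjoin_separable_eq.
  exact: separable_elementS (sub1v D) (separable_generatorP C 1%AS).
apply/forall_inP => x Hx.
by rewrite /= aimgM (eqP (forall_inP nD x Hx)) (eqP (forall_inP nC x Hx)).
Qed.

Lemma gal_sign {F : fieldType} {L : splittingFieldType F} (E : {subfield L})
  (x : gal_of E) (s : L) (c : F) : s ^+ 2 = c%:A -> x s = s \/ x s = - s.
Proof.
move=> sq; have xc : x (c%:A) = c%:A by rewrite linearZ /= rmorph1.
have : (x s) ^+ 2 = s ^+ 2 by rewrite sq -xc -sq rmorphXn.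
move/eqP; rewrite -subr_eq0 subr_sqr mulf_eq0 subr_eq0 addr_eq0.
by case/orP => /eqP; auto.
Qed.

Lemma gal_fixM {F : fieldType} {L : splittingFieldType F} (E : {subfield L})
  (s : L) (c : F) (x y : gal_of E) : s \in E -> s ^+ 2 = c%:A -> - s != s ->
  (((x * y)%g s == s) = ((x s == s) == (y s == s))).
Proof.
move=> sE sq sN; rewrite galM //.
case: (@gal_sign _ _ _ x _ _ sq) => ->; first by rewrite eqxx.
have yN : y (- s) = - (y s) by rewrite raddfN.
rewrite yN; case: (@gal_sign _ _ _ y _ _ sq) => ->.
  by rewrite (negbTE sN) eqxx.
by rewrite opprK (negbTE sN) !eqxx.
Qed.

Lemma Z2_eq (u v : 'Z_2) : (u == v) = ((u == 1%g) == (v == 1%g)).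
Proof. by case: u => [[|[|]]] //= ?; case: v => [[|[|]]] //= ?. Qed.

Lemma Z2_mul (u v : 'Z_2) : ((u * v)%g == 1%g) = ((u == 1%g) == (v == 1%g)).
Proof. by case: u => [[|[|]]] //= ?; case: v => [[|[|]]] //= ?. Qed.

Lemma Z22_exp (u : ('Z_2 * 'Z_2)%type) : (u ^+ 2)%g = 1%g.
Proof.
case: u => u1 u2; rewrite expgS expg1.
have h (v : 'Z_2) : (v * v = 1)%g by apply/eqP; rewrite Z2_mul eqxx.
change ((u1 * u1, u2 * u2) = (1, 1))%g.
by rewrite !h.
Qed.

Theorem proposition3p1
  (F : fieldType) (L : splittingFieldType F)
  (lam : {morphism [set: 'D_8] >-> 'Z_2})
  (eta : {morphism [set: 'Z_4] >-> 'Z_2})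
  (a b : F) (sa sb : L)
  (Dab Ca : {subfield L}) :
  ~~ (2%N \in [pchar F]) ->
  sa ^+ 2 = a%:A -> sb ^+ 2 = b%:A ->
  \dim <<<<1%VS; sa>>; sb>>%VS = 4%N ->
  (* D^{a,b} *)
  galois 1%VS Dab ->
  (<<<<1%VS; sa>>; sb>> <= Dab)%VS ->
  ('Gal(Dab / 1%VS) \isog [set: 'D_8])%g ->
  ('Gal(Dab / <<1%VS; sa * sb>>) \isog [set: 'Z_4])%g ->
  (* C^a *)
  galois 1%VS Ca ->
  cyclic 'Gal(Ca / 1%VS) ->
  \dim Ca = 4%N ->
  (<<1%VS; sa>> <= Ca)%VS ->
  (* lam : D -> Z/2 with kernel isomorphic to Z/2 x Z/2, eta : C -> Z/2 nontrivial *)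
  ('ker lam \isog [set: ('Z_2 * 'Z_2)%type])%g ->
  (eta @* [set: 'Z_4] != 1)%g ->
  galois 1%VS (Dab * Ca)%AS /\
  ('Gal((Dab * Ca)%AS / 1%VS) \isog pullback lam eta)%g.
Proof.
move=> ch2 sa2 sb2 dimE galD sED isoD isoC galC cycC dimC sAC kerlam etant.
have deg_a := @sq_adjoin_degree _ _ 1%AS sa.
have deg_b := @sq_adjoin_degree _ _ <<1; sa>>%AS sb.
have sa2K : sa ^+ 2 \in (1%AS : {subfield L}) by rewrite sa2 rpredZ ?mem1v.
have sb2K : sb ^+ 2 \in <<1; sa>>%AS by rewrite sb2 rpredZ ?mem1v.
have [da db] : adjoin_degree 1%AS sa = 2%N /\ adjoin_degree <<1; sa>>%AS sb = 2%N.
  move: dimE; rewrite dim_Fadjoin dim_Fadjoin dimv1 muln1.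
  move: (deg_a sa2K) (deg_b sb2K).
  case: (adjoin_degree _ sa) => [|[|[|]]] //; case: (adjoin_degree _ sb) => [|[|[|]]] //.
have dimA : \dim <<1; sa>>%AS = 2%N by rewrite dim_Fadjoin da dimv1.
have sa_not1 : sa \notin (1%AS : {subfield L}) by rewrite -adjoin_deg_eq1 da.
have sa0 : sa != 0 by apply: contraNneq sa_not1 => ->; rewrite mem0v.
have two0 : (2%:R : L) != 0.
  rewrite -(rmorph_nat (in_alg L)) fmorph_eq0.
  by apply: contra ch2 => h; apply/andP; split.
have saN : - sa != sa.
  apply: contra sa0 => /eqP h; have : sa *+ 2 = 0 by rewrite mulr2n -{1}h addNr.
  by rewrite -mulr_natl => /eqP; rewrite mulf_eq0 (negbTE two0).
have galK := galois_prod _ _ galD galC.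
have sAD : (<<1%VS; sa>> <= Dab)%VS := subv_trans (subv_adjoin _ sb) sED.
have cD8 : #|[set: 'D_8]| = 8%N := @card_dihedral 4 isT.
have cZ4 : #|[set: 'Z_4]| = 4%N by rewrite cardsT card_ord.
have cycZ4 : cyclic [set: 'Z_4] by apply/cyclicP; exists Zp1; exact: (Zp_cycle 3).
have cardG : #|'Gal(Dab / 1%VS)%g| = 8%N by rewrite (card_isog isoD) cD8.
have dimD : \dim Dab = 8%N by have := galois_dim galD; rewrite dimv1 divn1 cardG.
have cardH : #|'Gal(Ca / 1%VS)%g| = 4%N by have := galois_dim galC; rewrite dimv1 divn1 dimC.
have cycC' : cyclic 'Gal(Dab / <<1%VS; sa * sb>>)%g by rewrite (isog_cyclic isoC).
have cardC : #|'Gal(Dab / <<1%VS; sa * sb>>)%g| = 4%N by rewrite (card_isog isoC) cZ4.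
have [r defC] := cyclicP cycC'.
have ordr : #[r]%g = 4%N by rewrite orderE -defC cardC.
have sCG : 'Gal(Dab / <<1%VS; sa * sb>>)%g \subset 'Gal(Dab / 1%VS)%g := galS _ (sub1v _).
have rG : r \in 'Gal(Dab / 1%VS)%g by rewrite (subsetP sCG) // defC cycle_id.
have [y yGC] : exists y, y \in 'Gal(Dab / 1%VS)%g :\: 'Gal(Dab / <<1%VS; sa * sb>>)%g.
  apply/set0Pn; rewrite setD_eq0; apply/negP => /subset_leq_card.
  by rewrite cardG cardC.
have egen : extremal_generators 'Gal(Dab / 1%VS)%g 2 3 (r, y).
  by split => //; rewrite -defC.
have isoD' : ('Gal(Dab / 1%VS)%g \isog [set: 'D_(2 ^ 3)])%g := isoD.
have [[_ ord2 invC] [derG _ _ _] _ _ _] := dihedral2_structure (n := 3) isT egen isoD'.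
have saD : sa \in Dab by apply: (subvP sAD); exact: memv_adjoin.
have sbD : sb \in Dab by apply: (subvP sED); exact: memv_adjoin.
have rC : r \in 'Gal(Dab / <<1%VS; sa * sb>>)%g by rewrite defC cycle_id.
have r_nfix : r sa != sa.
  apply/negP => /eqP rsa.
  have sK : (<<1%VS; sa * sb>>%AS <= Dab)%VS.
    by apply/FadjoinP; split; [exact: sub1v | exact: rpredM].
  have rfix : r (sa * sb) = sa * sb := fixed_gal sK rC (memv_adjoin _ _).
  have rM : r (sa * sb) = r sa * r sb by rewrite rmorphM.
  have rsb : r sb = sb by apply: (mulfI sa0); rewrite -{1}rsa -rM.
  have sEF : (<<<<1%VS; sa>>; sb>>%AS <= fixedField [set r])%VS.
    apply/FadjoinP; split; last by apply/fixedFieldP => // x /set1P ->.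
    apply/FadjoinP; split; first exact: sub1v.
    by apply/fixedFieldP => // x /set1P ->.
  have rE : r \in 'Gal(Dab / <<<<1%VS; sa>>; sb>>%AS)%g.
    rewrite gal_kHom //; apply/kAHomP => z zE.
    by have [_ ->] := mem_fixedFieldP (subvP sEF z zE); rewrite ?set11.
  have galE : galois <<<<1%VS; sa>>; sb>>%AS Dab.
    by apply: (galoisS (K := 1%AS)) galD; rewrite sub1v.
  have cardE : #|'Gal(Dab / <<<<1%VS; sa>>; sb>>%AS)%g| = 2%N.
    by rewrite -(galois_dim galE) dimD dimE.
  by have := order_dvdG rE; rewrite cardE ordr.
have [f injf imf] := isogP isoD.
have [kap injk imk] := isogP kerlam.
have mu_r : (lam (f r) == 1%g) = false.
  apply/negP => /eqP lr.
  have frk : f r \in ('ker lam)%g by apply/kerP; rewrite ?inE.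
  have h := order_injm injk frk; rewrite (order_injm injf rG) ordr in h.
  by have := order_dvdn (kap (f r)) 2; rewrite Z22_exp eqxx h.
pose mu g := (lam (f g) == 1%g).
have muM : {in 'Gal(Dab / 1%VS)%g &, forall g h, mu (g * h)%g = (mu g == mu h)}.
  by move=> g h Gg Gh; rewrite /mu morphM // morphM ?inE // Z2_mul.
have fixM (x z : gal_of Dab) : ((x * z)%g sa == sa) = ((x sa == sa) == (z sa == sa)).
  exact: gal_fixM saD sa2 saN.
have muC : {in <[r]>%g, forall c, mu c = (c sa == sa)}.
  move=> c /cycleP[k ->]; elim: k => [|k IH].
    by rewrite expg0 /mu !morph1 ?inE // gal_id !eqxx.
  by rewrite expgSr muM ?groupX // fixM IH /mu mu_r (negbTE r_nfix).
have yGC' : y \in 'Gal(Dab / 1%VS)%g :\: <[r]>%g by rewrite -defC.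
have Gidx : #|'Gal(Dab / 1%VS)%g : <[r]>%g|%g = 2%N.
  by rewrite -divgS ?cycle_subG // cardG -orderE ordr.
have cosetP : {in 'Gal(Dab / 1%VS)%g :\: <[r]>%g, forall g, exists2 c, c \in <[r]>%g & g = (c * y)%g}.
  move=> g gGC; have := gGC; rewrite -(rcoset_index2 _ Gidx yGC') ?cycle_subG //.
  by case/rcosetP => c cC ->; exists c.
have sRG : (<[r]> \subset 'Gal(Dab / 1%VS))%g by rewrite cycle_subG.
pose t := if mu y == (y sa == sa) then 1%g else r.
have tC : t \in <[r]>%g by rewrite /t; case: ifP => _; rewrite ?group1 ?cycle_id.
have tG : t \in 'Gal(Dab / 1%VS)%g by rewrite (subsetP sRG).
pose theta g := if g \in <[r]>%g then g else (t * g)%g.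
have thetaG : {in 'Gal(Dab / 1%VS)%g, forall g, theta g \in 'Gal(Dab / 1%VS)%g}.
  by move=> g Gg; rewrite /theta; case: ifP => _; rewrite ?groupM.
have theta_mu : {in 'Gal(Dab / 1%VS)%g, forall g, mu (theta g) = (g sa == sa)}.
  move=> g Gg; rewrite /theta; case: ifP => gC; first exact: muC.
  have gGC : g \in 'Gal(Dab / 1%VS)%g :\: <[r]>%g by rewrite inE gC Gg.
  have [c cC ->] := cosetP g gGC.
  have cG : c \in 'Gal(Dab / 1%VS)%g by rewrite (subsetP sRG).
  have yG : y \in 'Gal(Dab / 1%VS)%g by case/setDP: yGC'.
  rewrite mulgA muM ?groupM // muM // fixM (muC t tC) (muC c cC).
  rewrite /t; case: ifP => /eqP E.
    by rewrite gal_id eqxx E.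
  rewrite (negbTE r_nfix); move: E.
  by case: (mu y); case: (y sa == sa); case: (c sa == sa).
have yG : y \in 'Gal(Dab / 1%VS)%g by case/setDP: yGC'.
have y2 : (y * y = 1)%g.
  by have := expg_order y; rewrite ord2 // expgS expg1.
have yV : (y^-1 = y)%g by rewrite -[y^-1%g]mulg1 -y2 mulKg.
have thetaM : {in 'Gal(Dab / 1%VS)%g &, {morph theta : g h / (g * h)%g}}.
  move=> g h Gg Gh; rewrite /theta.
  case: (boolP (g \in <[r]>%g)) => gC; case: (boolP (h \in <[r]>%g)) => hC.
  - by rewrite groupM.
  - rewrite (groupMl _ gC) (negbTE hC) !mulgA.
    by rewrite ((centsP (cycle_abelian r)) t tC g gC).
  - by rewrite (groupMr _ hC) (negbTE gC) mulgA.
  have gGC : g \in 'Gal(Dab / 1%VS)%g :\: <[r]>%g by rewrite inE gC Gg.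
  have hGC : h \in 'Gal(Dab / 1%VS)%g :\: <[r]>%g by rewrite inE hC Gh.
  have ghC : (g * h)%g \in <[r]>%g.
    have [c cC ->] := cosetP g gGC; have [d dC ->] := cosetP h hGC.
    have -> : (c * y * (d * y) = c * d^-1)%g.
      by rewrite -(invC d y dC yGC') /conjg yV !mulgA.
    by rewrite groupM ?groupV.
  rewrite ghC (conjgC t g) (invC t g tC gGC).
  by rewrite -mulgA mulKg.
have theta_inj : {in 'Gal(Dab / 1%VS)%g, forall g, theta g = 1%g -> g = 1%g}.
  move=> g Gg; rewrite /theta; case: ifP => // gC /eqP.
  rewrite -eq_invg_mul => /eqP tg.
  by move: gC; rewrite -tg groupV tC.
have saC : sa \in Ca by apply: (subvP sAC); exact: memv_adjoin.
have isoH : ('Gal(Ca / 1%VS) \isog [set: 'Z_4])%g.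
  by rewrite (isog_cyclic_card [set: 'Z_4]%G cycC) cycZ4 cZ4 cardH.
have [beta injb imb] := isogP isoH.
have [h defH] := cyclicP cycC.
have hH : h \in 'Gal(Ca / 1%VS)%g by rewrite defH cycle_id.
have ordh : #[h]%g = 4%N by rewrite orderE -defH cardH.
have fixMC (x z : gal_of Ca) : ((x * z)%g sa == sa) = ((x sa == sa) == (z sa == sa)).
  exact: gal_fixM saC sa2 saN.
have nu_h : (eta (beta h) == 1%g) = false.
  apply/negP => /eqP eh.
  have bH : (beta @* <[h]> = [set: 'Z_4])%g by rewrite -defH.
  rewrite morphim_cycle // in bH.
  have e1 : (eta @* <[beta h]> = 1)%g.
    by rewrite morphim_cycle ?inE // eh cycle1.
  by rewrite bH in e1; rewrite e1 eqxx in etant.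
have fix_h : (h sa == sa) = false.
  apply/negP => /eqP hsa.
  have allfix k : (h ^+ k)%g sa = sa.
    elim: k => [|k IH]; first by rewrite expg0 gal_id.
    by rewrite expgSr galM // IH hsa.
  have : sa \in fixedField 'Gal(Ca / 1%VS)%g.
    by apply/fixedFieldP => // x; rewrite defH => /cycleP[k ->].
  by rewrite (elimT galois_fixedField galC) (negbTE sa_not1).
have nuH : {in 'Gal(Ca / 1%VS)%g, forall x, (eta (beta x) == 1%g) = (x sa == sa)}.
  move=> x; rewrite defH => /cycleP[k ->]; elim: k => [|k IH].
    by rewrite expg0 !morph1 ?inE // gal_id !eqxx.
  have hkH : (h ^+ k)%g \in 'Gal(Ca / 1%VS)%g by rewrite groupX.
  rewrite expgSr morphM // morphM ?inE // Z2_mul fixMC IH.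
  by rewrite nu_h fix_h.
have nD : normalField 1%AS Dab by case/and3P: galD.
have nC : normalField 1%AS Ca by case/and3P: galC.
have nCD : ~~ (Ca <= Dab)%VS.
  apply/negP => sCD.
  have sKME : (1%AS <= Ca <= Dab)%VS by rewrite sub1v sCD.
  have nsN := normalField_normal sKME nC.
  have isoQ := normalField_isog galD sKME nC.
  have abQ : abelian ('Gal(Dab / 1%AS) / 'Gal(Dab / Ca))%g.
    by rewrite (isog_abelian isoQ) cyclic_abelian.
  have dN := der1_min (normal_norm nsN) abQ.
  rewrite derG in dN.
  have sq g : g \in 'Gal(Dab / 1%VS)%g -> (g ^+ 2)%g \in 'Gal(Dab / Ca)%g.
    move=> Gg; case: (boolP (g \in <[r]>%g)) => gC.
      case/cycleP: gC => k ->; rewrite -expgM mulnC expgM.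
      by apply: (subsetP dN); exact: mem_cycle.
    have := expg_order g; rewrite ord2 ?inE ?gC ?Gg // => ->; exact: group1.
  have := hH; rewrite -(normalField_img galD sKME nC) => /morphimP[g _ Gg eh].
  have : (h ^+ 2 = 1)%g.
    rewrite eh -morphX //; apply/(kerP _ (groupX 2 Gg)).
    by rewrite normalField_ker //; exact: sq.
  by move/eqP; rewrite -order_dvdn ordh.
have sepAC : separable <<1%VS; sa>>%AS Ca.
  by apply: (separableSl (sub1v _)); case/and3P: galC.
have dimK : \dim (Dab * Ca)%AS = 16%N.
  by rewrite (dim_comp Dab Ca <<1%VS; sa>>%AS) ?dimD ?dimC ?dimA.
have cardGK : #|'Gal((Dab * Ca)%AS / 1%VS)%g| = 16%N.
  by have := galois_dim galK; rewrite dimv1 divn1 dimK.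
have sDK : (1%AS <= Dab <= (Dab * Ca)%AS)%VS by rewrite sub1v field_subvMr.
have sCK : (1%AS <= Ca <= (Dab * Ca)%AS)%VS by rewrite sub1v field_subvMl.
pose resD := normalField_cast (E := (Dab * Ca)%AS) Dab.
pose resC := normalField_cast (E := (Dab * Ca)%AS) Ca.
have resDM := normalField_castM sDK nD.
have resCM := normalField_castM sCK nC.
have resDG : {in 'Gal((Dab * Ca)%AS / 1%VS)%g, forall x, resD x \in 'Gal(Dab / 1%VS)%g}.
  move=> x Kx; rewrite -(normalField_img galK sDK nD).
  exact: (mem_morphim (normalField_cast_morphism sDK nD)).
have resCH : {in 'Gal((Dab * Ca)%AS / 1%VS)%g, forall x, resC x \in 'Gal(Ca / 1%VS)%g}.
  move=> x Kx; rewrite -(normalField_img galK sCK nC).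
  exact: (mem_morphim (normalField_cast_morphism sCK nC)).
pose psi x := (f (theta (resD x)), beta (resC x)).
have psiM : {in 'Gal((Dab * Ca)%AS / 1%VS)%g &, {morph psi : x z / (x * z)%g}}.
  move=> x z Kx Kz.
  have e1 : resD (x * z)%g = (resD x * resD z)%g := resDM x z Kx Kz.
  have e2 : resC (x * z)%g = (resC x * resC z)%g := resCM x z Kx Kz.
  rewrite /psi e1 e2 thetaM ?resDG //.
  by rewrite morphM ?thetaG ?resDG // morphM ?resCH.
pose psim := Morphism psiM.
have resD_eq : {in 'Gal((Dab * Ca)%AS / 1%VS)%g, forall x, resD x sa = x sa}.
  by move=> x Kx; apply: (normalField_cast_eq sDK nD Kx).
have resC_eq : {in 'Gal((Dab * Ca)%AS / 1%VS)%g, forall x, resC x sa = x sa}.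
  by move=> x Kx; apply: (normalField_cast_eq sCK nC Kx).
have injpsi : ('injm psim)%g.
  apply/subsetP => x kx; have Kx := dom_ker kx.
  have px : psi x = 1%g := mker kx.
  have p1 : f (theta (resD x)) = 1%g by rewrite -[LHS]/((psi x).1) px.
  have p2 : beta (resC x) = 1%g by rewrite -[LHS]/((psi x).2) px.
  have dx : resD x = 1%g.
    apply: theta_inj; first exact: resDG.
    by apply/eqP; rewrite -(morph_injm_eq1 injf) ?thetaG ?resDG // p1.
  have cx : resC x = 1%g.
    by apply/eqP; rewrite -(morph_injm_eq1 injb) ?resCH // p2.
  have xD : x \in 'Gal((Dab * Ca)%AS / Dab)%g.
    by rewrite -(normalField_ker sDK nD); apply/kerP.
  have xC : x \in 'Gal((Dab * Ca)%AS / Ca)%g.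
    by rewrite -(normalField_ker sCK nC); apply/kerP.
  have sDV : (Dab <= fixedField [set x])%VS.
    apply/subvP => w wD; apply/fixedFieldP.
      by apply: (subvP (field_subvMr _ _)).
    move=> z /set1P ->; apply: (fixed_gal _ xD wD).
    by case/andP: sDK.
  have sCV : (Ca <= fixedField [set x])%VS.
    apply/subvP => w wC; apply/fixedFieldP.
      by apply: (subvP (field_subvMl _ _)).
    move=> z /set1P ->; apply: (fixed_gal _ xC wC).
    by case/andP: sCK.
  have sKV := prodv_sub sDV sCV.
  apply/set1P/eqP/gal_eqP => v vK; rewrite gal_id.
  by have [_ ->] := mem_fixedFieldP (subvP sKV v vK); rewrite ?set11.
have Pgs : group_set (pullback lam eta).
  apply/group_setP; split.
    by rewrite inE /= !morph1 ?inE.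
  move=> [u1 v1] [u2 v2]; rewrite !inE /= => /eqP e1 /eqP e2.
  by rewrite morphM ?inE // morphM ?inE // e1 e2.
pose PG := Group Pgs.
have subP : (psim @* 'Gal((Dab * Ca)%AS / 1%VS) \subset PG)%g.
  apply/subsetP => _ /morphimP[x _ Kx ->]; rewrite inE /= Z2_eq.
  have := theta_mu (resD x) (resDG x Kx); rewrite /mu => ->.
  by rewrite nuH ?resCH // resD_eq // resC_eq.
have cardQ : #|(psim @* 'Gal((Dab * Ca)%AS / 1%VS))%g| = 16%N.
  by rewrite card_injm // cardGK.
have dvd1 : (16 %| #|PG|)%N by rewrite -cardQ cardSg.
have c32 : #|[set: ('D_8 * 'Z_4)%type]| = 32%N.
  by rewrite cardsT card_prod -!cardsT cD8 cZ4.
have dvd2 : (#|PG| %| 32)%N by rewrite -c32 cardSg ?subsetT.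
have eZ : (eta Zp1 != 1)%g.
  apply: contra etant => /eqP e.
  have e1 : (eta @* <[Zp1 : 'Z_4]> = 1)%g by rewrite morphim_cycle ?inE // e cycle1.
  by rewrite -(Zp_cycle 3) in e1; rewrite e1.
have PnT : (PG != [set: ('D_8 * 'Z_4)%type] :> {set _})%g.
  apply/negP => /eqP e.
  have : ((1%g, Zp1) : ('D_8 * 'Z_4)%type) \in PG by rewrite e inE.
  by rewrite inE /= morph1 ?inE // eq_sym (negbTE eZ).
have lt32 : (#|PG| < 32)%N by rewrite -c32 proper_card // properT.
have c16 : #|PG| = 16%N.
  move: dvd1 dvd2 lt32; case/dvdnP => k ->.
  case: k => [|[|[|k]]] //.
split => //.
apply: (isom_isog (B := gval PG) psim) => //.
apply/isomP; split => //.
by apply/eqP; rewrite eqEcard subP c16 cardQ.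
Qed.
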